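(* Let $n\geq 1$ and let $C$ be a CRC in $G_n$ with covering radius $\rho\geq 1$, $a_0=0$ and $a_1=1$. Then $c_1=1$, and there is a CRC $D$ in the ternary Hamming graph $H(n,3)$ with the same parameter matrix such that $C=\{x\in\mathbb{Z}^n: (x_1\bmod 3,\ldots,x_n\bmod 3)\in D\}$.
   Context: $G_n$: vertex set $\mathbb{Z}^n$, $x\sim y$ iff $\sum_i|x_i-y_i|=1$. $H(n,3)$: vertex set $\{0,1,2\}^n$, adjacent iff differing in exactly one coordinate. For a code $C$ in a graph with covering radius $\rho$, $C_i=\{v:d(v,C)=i\}$; $C$ is a CRC if for all $i,j$ every vertex of $C_i$ has the same number $\alpha_{ij}$ of neighbours in $C_j$, with $\alpha_{ij}=0$ for $|i-j|>1$; $a_i=\alpha_{ii}$, $b_i=\alpha_{i,i+1}$, $c_i=\alpha_{i,i-1}$, and the parameter matrix is $(\alpha_{ij})$. *)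

(* Defs.v *)
From mathcomp Require Import all_boot all_order all_algebra.
Set Implicit Arguments. Unset Strict Implicit. Unset Printing Implicit Defensive.
Import GRing.Theory Num.Theory.

Section Graphs.
Variable T : eqType.
Variable adj : rel T.

Definition within (C : T -> Prop) (v : T) (k : nat) : Prop :=
  exists c, exists s : seq T,
    C c /\ (size s <= k)%N /\ path adj c s /\ last c s = v.

(* d(v, C) = i, i.e. v \in C_i *)
Definition dist_is (C : T -> Prop) (v : T) (i : nat) : Prop :=
  within C v i /\ forall j, (j < i)%N -> ~ within C v j.

Definition nbrs_count (S : T -> Prop) (v : T) (k : nat) : Prop :=
  exists s : seq T, uniq s /\ size s = k /\
    forall w, w \in s <-> (adj v w /\ S w).

Definition IsCRC (C : T -> Prop) (rho : nat) (alpha : nat -> nat -> nat) : Prop :=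
  (forall v, exists i, (i <= rho)%N /\ dist_is C v i) /\
  (exists v, dist_is C v rho) /\
  (forall i j, (i <= rho)%N -> (j <= rho)%N ->
     forall v, dist_is C v i -> nbrs_count (fun w => dist_is C w j) v (alpha i j)) /\
  (forall i j, (i <= rho)%N -> (j <= rho)%N -> (i.+1 < j)%N || (j.+1 < i)%N ->
     alpha i j = 0%N).
End Graphs.

Definition Zn (n : nat) := {ffun 'I_n -> int}.
Definition Gadj (n : nat) : rel (Zn n) :=
  fun x y => (\sum_(i < n) `|x i - y i|)%N == 1%N.

Definition H3 (n : nat) := {ffun 'I_n -> 'I_3}.
Definition Hadj (n : nat) : rel (H3 n) :=
  fun x y => #|[set i | x i != y i]| == 1%N.

Definition mod3 (n : nat) (x : Zn n) : H3 n :=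
  [ffun i => inord (absz (x i %% 3)%Z)].

(* Main.v *)
Require Import Defs.
From mathcomp Require Import all_boot all_order all_algebra zify.
Import GRing.Theory Num.Theory.
Set Implicit Arguments. Unset Strict Implicit. Unset Printing Implicit Defensive.

Section Gen.
Variable T : eqType.
Variable adj : rel T.
Implicit Types (C S : T -> Prop) (v w : T).

Lemma within0 C v : within adj C v 0 <-> C v.
Proof.
split.
- case=> c [s [Cc [sz [_ <-]]]]. by case: s sz.
- move=> Cv; exists v, [::]; split => //.
Qed.

Lemma within_mono C v k : within adj C v k -> within adj C v k.+1.
Proof. case=> c [s [Cc [sz [p l]]]]; exists c, s; do !split => //; exact: leqW. Qed.

Lemma withinS C v k : within adj C v k.+1 <->
  within adj C v k \/ exists u, within adj C u k /\ adj u v.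
Proof.
split.
- case=> c [s [Cc [sz [p l]]]].
  case: (leqP (size s) k) => hs.
    by left; exists c, s.
  right; move: p l sz hs; case/lastP: s => [|s u] //=.
  rewrite rcons_path last_rcons size_rcons => /andP [p a] <- sz hs.
  exists (last c s); split => //; exists c, s; do !split => //.
- case; first exact: within_mono.
  case=> u [[c [s [Cc [sz [p l]]]]] a].
  exists c, (rcons s v); do !split.
  + done.
  + by rewrite size_rcons.
  + by rewrite rcons_path p l a.
  + by rewrite last_rcons.
Qed.

Lemma dist0 C v : dist_is adj C v 0 <-> C v.
Proof.
split; first by case=> /within0.
move=> Cv; split; first exact/within0.
by move=> j.
Qed.

Lemma dist_uniq C v i j : dist_is adj C v i -> dist_is adj C v j -> i = j.
Proof.
case=> wi ni [wj nj]; case: (ltngtP i j) => // h.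
- by case: (nj _ h).
- by case: (ni _ h).
Qed.

Lemma count0 S v w : nbrs_count adj S v 0 -> adj v w -> S w -> False.
Proof.
case=> s [_ [sz mem]] a Sw.
have : w \in s by apply/mem.
by move/size0nil: sz => ->.
Qed.

Lemma count1 S v w1 w2 : nbrs_count adj S v 1 -> adj v w1 -> S w1 ->
  adj v w2 -> S w2 -> w1 = w2.
Proof.
case=> s [_ [sz mem]] a1 s1 a2 s2.
have : w1 \in s by apply/mem.
have : w2 \in s by apply/mem.
clear mem; case: s sz => [|u [|]] //= _.
by rewrite !inE => /eqP -> /eqP ->.
Qed.

Lemma count1_ex S v : nbrs_count adj S v 1 -> exists w, adj v w /\ S w.
Proof.
case=> s [_ [sz mem]].
move: sz mem; case: s => [|u s] // _ mem.
exists u; apply/mem; exact: mem_head.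
Qed.

Lemma count_set S v k c : nbrs_count adj S v k ->
  (forall w, adj v w /\ S w <-> w = c) -> k = 1%N.
Proof.
case=> s [us [sz mem]] h.
have e : [:: c] =i s.
  move=> w; rewrite inE; apply/eqP/idP.
    by move=> ->; apply/mem/h.
  by move/mem/h.
have := uniq_size_uniq (isT : uniq [:: c]) e.
by rewrite us sz => /esym/eqP.
Qed.

Lemma count_ext S S' v k : (forall w, S w <-> S' w) ->
  nbrs_count adj S v k -> nbrs_count adj S' v k.
Proof.
move=> e [s [us [sz mem]]]; exists s; split => //; split => // w; split.
- by move/mem => [a /e b]; split.
- by case=> a /e b; apply/mem.
Qed.
End Gen.

Section Zn.
Variable n : nat.
Local Open Scope ring_scope.
Implicit Types (x y u v : Zn n) (h : H3 n).

Definition shift (x : Zn n) (i : 'I_n) (d : int) : Zn n :=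
  [ffun j => if j == i then x j + d else x j].

Lemma shiftE x i d j : shift x i d j = if j == i then x j + d else x j.
Proof. by rewrite ffunE. Qed.

Lemma shiftK x i a b : shift (shift x i a) i b = shift x i (a + b).
Proof. apply/ffunP=> j; rewrite !shiftE; case: eqP => // _; by rewrite addrA. Qed.

Lemma shiftC x i j a b : shift (shift x i a) j b = shift (shift x j b) i a.
Proof.
apply/ffunP=> k; rewrite !shiftE; case: (k =P i); case: (k =P j) => //= *;
by rewrite -!addrA (addrC a).
Qed.

Lemma shift0 x i : shift x i 0 = x.
Proof. by apply/ffunP=> j; rewrite shiftE addr0; case: eqP. Qed.

Definition sgn (s : int) := s = 1 \/ s = -1.

Lemma mod3E (x : Zn n) i : nat_of_ord (mod3 x i) = absz (x i %% 3)%Z.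
Proof. rewrite ffunE inordK //; lia. Qed.

Lemma mod3_eq (x y : Zn n) i : (mod3 x i == mod3 y i) = ((x i %% 3)%Z == (y i %% 3)%Z).
Proof. rewrite -val_eqE /= !mod3E; apply/eqP/eqP; lia. Qed.

Definition lift3 (h : H3 n) : Zn n := [ffun i => ((h i : nat)%:Z)].

Lemma mod3_lift h : mod3 (lift3 h) = h.
Proof.
apply/ffunP=> i; apply: val_inj; rewrite /= mod3E ffunE.
have := ltn_ord (h i); lia.
Qed.

Lemma Gadj_shift x i s : sgn s -> Gadj x (shift x i s).
Proof.
move=> hs; rewrite /Gadj (bigD1 i) //= big1 => [|j ji].
  rewrite shiftE eqxx; case: hs => ->; lia.
by rewrite shiftE (negbTE ji) subrr.
Qed.

Lemma GadjP x y : Gadj x y -> exists i s, sgn s /\ y = shift x i s.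
Proof.
rewrite /Gadj => /eqP hs.
case: (pickP (fun i => `|x i - y i|%N != 0%N)) => [i hi|h0]; last first.
  move: hs; rewrite big1 // => i _; by move/negbFE/eqP: (h0 i).
move: hs; rewrite (bigD1 i) //= => hs.
move: hi => /= hi.
have r0 : (\sum_(j < n | j != i) `|x j - y j|)%N = 0%N.
  have aux : forall a b : nat, (a + b = 1 -> a != 0 -> b = 0)%N by lia.
  exact: (aux _ _ hs hi).
move/eqP: r0; rewrite sum_nat_eq0 => /forallP r0.
exists i, (y i - x i); split.
  rewrite /sgn; lia.
apply/ffunP=> j; rewrite shiftE; case: eqP => [->|/eqP ji].
  by rewrite addrC subrK.
have := r0 j; rewrite ji /=; lia.
Qed.

Lemma Gadj_sym x y : Gadj x y -> Gadj y x.
Proof.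
case/GadjP=> i [s [hs ->]].
have e : x = shift (shift x i s) i (- s) by rewrite shiftK subrr shift0.
rewrite {2}e.
apply: Gadj_shift; rewrite /sgn; case: hs => ->; lia.
Qed.

Lemma HadjP h h' : Hadj h h' -> exists i, h i != h' i /\ forall j, j != i -> h j = h' j.
Proof.
rewrite /Hadj => /cards1P [i hi]; exists i; split.
  have : i \in [set i] by rewrite inE.
  by rewrite -hi inE.
move=> j ji; have : j \notin [set i] by rewrite inE.
by rewrite -hi inE negbK => /eqP.
Qed.

Lemma Hadj_sym h h' : Hadj h h' -> Hadj h' h.
Proof.
rewrite /Hadj; congr (_ == _); apply: eq_card => i; by rewrite !inE eq_sym.
Qed.
Lemma Hadj_symE h h' : Hadj h h' = Hadj h' h.
Proof. by apply/idP/idP; apply: Hadj_sym. Qed.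

Lemma L1 x y : Gadj x y -> Hadj (mod3 x) (mod3 y).
Proof.
case/GadjP=> i [s [hs ->]]; rewrite /Hadj; apply/cards1P; exists i.
apply/setP=> j; rewrite !inE mod3_eq shiftE; case: (eqVneq j i) => [->|ji].
  case: hs => ->; lia.
by rewrite eqxx.
Qed.

Lemma L2 x h : Hadj (mod3 x) h -> exists y, Gadj x y /\ mod3 y = h.
Proof.
case/HadjP=> i [ni eq].
set t := nat_of_ord (h i).
have tl : (t < 3)%N by exact: ltn_ord.
have nt : absz (x i %% 3)%Z != t by rewrite -mod3E.
pose s : int := if (t%:Z == (x i + 1) %% 3)%Z then 1 else -1.
exists (shift x i s); split.
  by apply: Gadj_shift; rewrite /sgn /s; case: ifP => _; [left|right].
apply/ffunP=> j; case: (eqVneq j i) => [->|ji].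
  apply: val_inj; rewrite /= mod3E shiftE eqxx -/t /s; case: ifP; lia.
rewrite -(eq j ji); apply/eqP; by rewrite mod3_eq shiftE (negbTE ji).
Qed.

Lemma nbr_inj x u v : Gadj x u -> Gadj x v -> mod3 u = mod3 v -> u = v.
Proof.
case/GadjP=> i [s [hs ->]]; case/GadjP=> j [t [ht ->]] e.
have ei : forall k, (shift x i s k %% 3 = shift x j t k %% 3)%Z.
  by move=> k; apply/eqP; rewrite -mod3_eq e.
have := ei i; rewrite !shiftE eqxx.
case: (eqVneq i j) => [<-|ij] h.
  suff -> : s = t by [].
  by move: h; case: hs => ->; case: ht => ->; lia.
by move: h; case: hs => ->; lia.
Qed.

End Zn.

Section Core.
Variable n : nat.
Local Open Scope ring_scope.
Implicit Types (x y u v w c : Zn n).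
Variable C : Zn n -> Prop.
Hypothesis H00 : forall c w, C c -> Gadj c w -> ~ C w.
Hypothesis H11 : forall y, dist_is (@Gadj n) C y 1 ->
  nbrs_count (@Gadj n) (fun w => dist_is (@Gadj n) C w 1) y 1.
Let D1 v := dist_is (@Gadj n) C v 1.

Lemma coord x y k : x = y -> x k = y k.
Proof. by move=> ->. Qed.

Lemma F1 c y : C c -> Gadj c y -> D1 y.
Proof.
move=> Cc a; split.
  exists c, [:: y]; do !split => //=; by rewrite a.
move=> j; rewrite ltnS leqn0 => /eqP -> /within0 Cy; exact: (H00 Cc a).
Qed.

Lemma D1notC y : D1 y -> ~ C y.
Proof. by move=> d /(dist0 (@Gadj n)) d0; have := dist_uniq d d0. Qed.

Lemma D1uniq y w1 w2 : D1 y -> Gadj y w1 -> D1 w1 -> Gadj y w2 -> D1 w2 -> w1 = w2.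
Proof. move=> d; exact: (count1 (H11 d)). Qed.

Lemma sgnN s : sgn s -> sgn (- s).
Proof. rewrite /sgn; case=> ->; lia. Qed.

Lemma A c i s : C c -> sgn s ->
  D1 (shift c i (2*s)) /\ forall w, Gadj (shift c i s) w -> D1 w -> w = shift c i (2*s).
Proof.
move=> Cc hs.
have dy : D1 (shift c i s) by apply: F1 Cc (Gadj_shift _ _ hs).
case: (count1_ex (H11 dy)) => z [az dz].
suff ez : z = shift c i (2*s).
  rewrite -ez; split => // w aw dw; exact: (D1uniq dy aw dw az dz).
move: az dz; case/GadjP=> j [t [ht ->]] dz.
case: (eqVneq j i) => [ji|ji].
  move: dz; rewrite ji shiftK.
  case: hs ht => ->; case=> -> dz.
  - by congr shift.
  - by case: (D1notC dz); rewrite subrr shift0.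
  - by case: (D1notC dz); rewrite addrC subrr shift0.
  - by congr shift.
exfalso.
have dwv : D1 (shift c j t) by apply: F1 Cc (Gadj_shift _ _ ht).
have e : shift c i s = shift c j t.
  apply: (D1uniq dz) => //.
  - apply: Gadj_sym; exact: Gadj_shift.
  - rewrite shiftC; apply: Gadj_sym; exact: Gadj_shift.
have := coord i e; rewrite !shiftE eqxx eq_sym (negbTE ji); case: hs => ->; lia.
Qed.

Lemma B_ex c (i0 : 'I_n) k : C c ->
  nbrs_count (@Gadj n) C (shift c i0 1) k -> k = 1%N.
Proof.
move=> Cc cnt; apply: (count_set cnt (c := c)) => w; split; last first.
  move=> ->; split => //; apply: Gadj_sym; apply: Gadj_shift; by left.
case; case/GadjP=> j [t [ht ->]] Cw.
case: (eqVneq j i0) => [ji|ji].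
  move: Cw; rewrite ji shiftK; case: ht => -> Cw.
  - case: (A i0 (s := 1) Cc (or_introl erefl)) => d _.
    by case: (D1notC d).
  - by rewrite subrr shift0.
exfalso.
have e1 : shift (shift (shift c i0 1) j t) j (- t) = shift c i0 1 by rewrite shiftK subrr shift0.
case: (A j Cw (sgnN ht)) => _; rewrite e1 => u.
case: (A i0 (s := 1) Cc (or_introl erefl)) => d _.
have e : shift c i0 (2 * 1) = shift (shift (shift c i0 1) j t) j (2 * - t).
  apply: u d.
  have -> : shift c i0 (2*1) = shift (shift c i0 1) i0 1 by rewrite shiftK; congr shift; lia.
  apply: Gadj_shift; by left.
have := coord j e; rewrite !shiftE eqxx (negbTE ji); case: ht => ->; lia.
Qed.

Lemma P c i s : C c -> sgn s -> (forall w, D1 w -> nbrs_count (@Gadj n) C w 1) ->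
  C (shift c i (3 * s)).
Proof.
move=> Cc hs cnt.
case: (A i Cc hs) => dw uw.
case: (count1_ex (cnt _ dw)) => u [au Cu].
move: au Cu; case/GadjP=> j [t [ht ->]] Cu.
case: (eqVneq j i) => [ji|ji].
  move: Cu; rewrite ji shiftK => Cu.
  have [e|e] : t = s \/ t = - s by case: hs ht => ->; case=> ->; lia.
    by have -> : 3 * s = 2 * s + t by lia.
  have e2 : 2 * s + t = s by lia.
  rewrite e2 in Cu; case: (D1notC (F1 Cc (Gadj_shift _ _ hs)) Cu).
exfalso.
have e1 : shift (shift (shift c i (2*s)) j t) j (- t) = shift c i (2*s) by rewrite shiftK subrr shift0.
case: (A j Cu (sgnN ht)) => _; rewrite e1 => uu.
have d : D1 (shift c i s) by apply: F1 Cc (Gadj_shift _ _ hs).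
have e : shift c i s = shift (shift (shift c i (2*s)) j t) j (2 * - t).
  apply: uu d.
  have -> : shift c i s = shift (shift c i (2*s)) i (- s) by rewrite shiftK; congr shift; lia.
  exact: Gadj_shift (sgnN hs).
have := coord j e; rewrite !shiftE eqxx (negbTE ji); case: ht => ->; lia.
Qed.

End Core.

Section Per.
Variable n : nat.
Local Open Scope ring_scope.
Implicit Types (x y u v w c : Zn n).

Lemma mod3_shift3 x i k : mod3 (shift x i (3 * k)) = mod3 x.
Proof.
apply/ffunP=> j; apply/eqP; rewrite mod3_eq shiftE; case: (j =P i) => _ //; apply/eqP; lia.
Qed.

Definition qs x := (\sum_(j < n) absz (x j %/ 3)%Z)%N.

Lemma qs_split x i : qs x = (absz (x i %/ 3)%Z + \sum_(j < n | j != i) absz (x j %/ 3)%Z)%N.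
Proof. by rewrite /qs (bigD1 i). Qed.

Lemma qs_shift x i d : qs (shift x i d) =
  (absz ((x i + d) %/ 3)%Z + \sum_(j < n | j != i) absz (x j %/ 3)%Z)%N.
Proof.
rewrite (qs_split _ i) shiftE eqxx; congr (_ + _)%N.
by apply: eq_bigr => j ji; rewrite shiftE (negbTE ji).
Qed.

Lemma period (C : Zn n -> Prop) :
  (forall c i, C c -> C (shift c i 3)) -> (forall c i, C c -> C (shift c i (-3))) ->
  forall x, C x <-> C (lift3 (mod3 x)).
Proof.
move=> Pp Pm.
have st : forall x i, C x <-> C (shift x i 3).
  move=> x i; split; first exact: Pp.
  move/(Pm _ i); by rewrite shiftK subrr shift0.
have sm : forall x i, C x <-> C (shift x i (-3)).
  move=> x i; split; first exact: Pm.
  move/(Pp _ i); by rewrite shiftK addrC subrr shift0.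
suff H : forall m x, (qs x <= m)%N -> C x <-> C (lift3 (mod3 x)).
  move=> x; exact: (H _ x (leqnn _)).
elim=> [|m IH] x hx.
  suff -> : lift3 (mod3 x) = x by [].
  move: hx; rewrite leqn0 /qs sum_nat_eq0 => /forallP h0.
  apply/ffunP=> i; rewrite ffunE mod3E; have := h0 i; rewrite /=; lia.
case: (leqP (qs x) m) => hm; first exact: IH.
case: (pickP (fun i => absz (x i %/ 3)%Z != 0%N)) => [i /= hi|h0]; last first.
  exfalso; move: hm; rewrite /qs big1 // => i _; by move/negbFE/eqP: (h0 i).
have [pos|neg] : (0 < x i %/ 3)%Z \/ (x i %/ 3 < 0)%Z by lia.
  have e : mod3 (shift x i (3 * -1)) = mod3 x by apply: mod3_shift3.
  rewrite (sm x i) -e; apply: IH.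
  move: hm hx; rewrite qs_shift (qs_split x i).
  have aux : forall a b r : nat, (a.+1 = b)%N -> (m < b + r)%N -> (b + r <= m.+1)%N -> (a + r <= m)%N by lia.
  apply: aux; lia.
have e : mod3 (shift x i (3 * 1)) = mod3 x by apply: mod3_shift3.
rewrite (st x i) -e; apply: IH.
move: hm hx; rewrite qs_shift (qs_split x i).
have aux : forall a b r : nat, (a.+1 = b)%N -> (m < b + r)%N -> (b + r <= m.+1)%N -> (a + r <= m)%N by lia.
apply: aux; lia.
Qed.
End Per.

Lemma count_transfer n (S' : H3 n -> Prop) (x : Zn n) k :
  nbrs_count (@Gadj n) (fun w => S' (mod3 w)) x k -> nbrs_count (@Hadj n) S' (mod3 x) k.
Proof.
case=> s [us [sz mem]]; exists (map (@mod3 n) s); split; [|split].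
- rewrite map_inj_in_uniq // => u v /mem [gu _] /mem [gv _]; exact: nbr_inj gu gv.
- by rewrite size_map.
- move=> w; split.
  + case/mapP=> u /mem [gu su] ->; split => //; exact: L1.
  + case=> hw sw; case: (L2 hw) => u [gu eu]; apply/mapP; exists u => //.
    by apply/mem; split => //; rewrite eu.
Qed.

Lemma within_eq n (C : Zn n -> Prop) (D : H3 n -> Prop) :
  (forall x, C x <-> D (mod3 x)) ->
  forall k x, within (@Gadj n) C x k <-> within (@Hadj n) D (mod3 x) k.
Proof.
move=> CD; elim=> [|k IH] x.
  split => /within0 h; apply/within0; exact/CD.
split => /withinS [h|[u [wu au]]]; apply/withinS.
- by left; apply/IH.
- right; exists (mod3 u); split; [exact/IH | exact: L1].
- by left; apply/IH.
- right; case: (L2 (Hadj_sym au)) => y [gy ey]; exists y; split.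
    by apply/IH; rewrite ey.
  exact: Gadj_sym.
Qed.

Lemma dist_eq n (C : Zn n -> Prop) (D : H3 n -> Prop) :
  (forall x, C x <-> D (mod3 x)) ->
  forall i x, dist_is (@Gadj n) C x i <-> dist_is (@Hadj n) D (mod3 x) i.
Proof.
move=> CD i x; split=> [][w nw]; split.
- exact/(within_eq CD).
- by move=> j ji /(within_eq CD); apply: nw.
- exact/(within_eq CD).
- by move=> j ji /(within_eq CD); apply: nw.
Qed.

Theorem mainTheorem7 (n : nat) (C : Zn n -> Prop) (rho : nat)
    (alpha : nat -> nat -> nat) :
  (1 <= n)%N ->
  IsCRC (@Gadj n) C rho alpha ->
  (1 <= rho)%N ->
  alpha 0%N 0%N = 0%N ->
  alpha 1%N 1%N = 1%N ->
  alpha 1%N 0%N = 1%N /\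
  exists D : H3 n -> Prop,
    IsCRC (@Hadj n) D rho alpha /\
    forall x : Zn n, C x <-> D (mod3 x).
Proof.
move=> n1 [cov [[v0 dv0] [cnt zer]]] rho1 a00 a11.
have H00 : forall c w, C c -> Gadj c w -> ~ C w.
  move=> c w Cc a Cw.
  have := cnt 0%N 0%N (leq0n _) (leq0n _) c (proj2 (dist0 _ _ _) Cc).
  rewrite a00 => k; apply: (count0 k a); exact/dist0.
have H11 : forall y, dist_is (@Gadj n) C y 1 ->
    nbrs_count (@Gadj n) (fun w => dist_is (@Gadj n) C w 1) y 1.
  by move=> y d; rewrite -[X in nbrs_count _ _ _ X]a11; apply: cnt.
have [c Cc] : exists c, C c by case: dv0 => [[c [s [Cc _]]] _]; exists c.
have cnt10 : forall w, dist_is (@Gadj n) C w 1 -> nbrs_count (@Gadj n) C w (alpha 1%N 0%N).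
  move=> w d; apply: (count_ext (S := fun w => dist_is (@Gadj n) C w 0)).
    by move=> u; exact: dist0.
  exact: cnt.
have B : alpha 1%N 0%N = 1%N.
  pose i0 : 'I_n := Ordinal n1.
  apply: (B_ex H00 H11 (i0 := i0) Cc); apply: cnt10.
  apply: (F1 H00 Cc); apply: Gadj_shift; by left.
split => //.
have cnt1 : forall w, dist_is (@Gadj n) C w 1 -> nbrs_count (@Gadj n) C w 1.
  by move=> w d; rewrite -B; apply: cnt10.
have Pp : forall c i, C c -> C (shift c i 3).
  move=> c' i Cc'; have := P H00 H11 i Cc' (or_introl erefl) cnt1.
  by have -> : (3 * 1 : int)%R = 3%R by lia.
have Pm : forall c i, C c -> C (shift c i (-3)).
  move=> c' i Cc'; have := P H00 H11 i Cc' (or_intror erefl) cnt1.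
  by have -> : (3 * -1 : int)%R = (-3)%R by lia.
pose D (h : H3 n) := C (lift3 h).
have CD : forall x, C x <-> D (mod3 x) by move=> x; exact: period Pp Pm x.
exists D; split => //.
have DE := dist_eq CD.
split; [|split; [|split]].
- move=> h; case: (cov (lift3 h)) => i [ir d]; exists i; split => //.
  by rewrite -(mod3_lift h); apply/DE.
- by exists (mod3 v0); apply/DE.
- move=> i j ir jr h d.
  rewrite -(mod3_lift h); apply: count_transfer.
  apply: (count_ext (S := fun w => dist_is (@Gadj n) C w j)).
    by move=> u; exact: DE.
  apply: cnt => //; apply/DE; by rewrite mod3_lift.
- exact: zer.
Qed.
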